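(* Let $G$ be a chordal graph and $(T,\mathcal{S})$ a subtree model of $G$. Let $C,C',C''$ be three distinct maximal cliques of $G$. If the clique subtree $S_T(C')$ intersects the connecting path $p(S_T(C),S_T(C''))$, then $C'$ is a separator in $G$ (i.e. some two vertices of $G-C'$ lie in different connected components of $G-C'$).
   Context: A subtree model of a graph $G$ is a pair $(T,\mathcal{S})$ where $T$ is a tree and $\mathcal{S}=\{S_v \mid v\in V(G)\}$ is a family of connected subtrees of $T$ such that for any two distinct vertices $u,v$, $S_u\cap S_v\neq\emptyset$ iff $uv\in E(G)$. For a maximal clique $C$ of $G$, the clique subtree is $S_T(C)=\bigcap_{v\in C}S_v$; by the Helly property it is nonempty, and clique subtrees of distinct maximal cliques are disjoint. For two disjoint subtrees $S,S'$ of $T$, the connecting path $p(S,S')$ is the minimal subgraph $P$ of $T$ (a path) such that $S\cup S'\cup P$ is connected; it contains exactly one node of $S$ and one node of $S'$. *)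

(* Defs.v *)
From mathcomp Require Import all_boot.
Set Implicit Arguments. Unset Strict Implicit. Unset Printing Implicit Defensive.

Definition simple_graph (V : finType) (g : rel V) : Prop :=
  symmetric g /\ irreflexive g.

Definition chordal (V : finType) (g : rel V) : Prop :=
  forall s : seq V, uniq s -> 4 <= size s -> cycle g s ->
    exists x y, [/\ x \in s, y \in s, x != y, g x y
                 & (y != next s x) && (x != next s y)].

Definition is_tree (N : finType) (t : rel N) : Prop :=
  [/\ simple_graph t,
      (forall x y : N, connect t x y)
    & (forall s : seq N, uniq s -> 3 <= size s -> ~~ cycle t s)].

Definition restrict (T : finType) (e : rel T) (A : {set T}) : rel T :=
  [rel x y | [&& e x y, x \in A & y \in A]].

Definition subtree (N : finType) (t : rel N) (A : {set N}) : Prop :=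
  A != set0 /\ {in A &, forall x y, connect (restrict t A) x y}.

Definition subtree_model (V N : finType) (g : rel V) (t : rel N)
    (S : V -> {set N}) : Prop :=
  [/\ is_tree t,
      (forall v, subtree t (S v))
    & (forall u v, u != v -> (S u :&: S v != set0) = g u v)].

Definition clique (V : finType) (g : rel V) (C : {set V}) : Prop :=
  {in C &, forall x y, x != y -> g x y}.

Definition maximal_clique (V : finType) (g : rel V) (C : {set V}) : Prop :=
  clique g C /\ (forall D : {set V}, clique g D -> C \subset D -> D = C).

Definition clique_subtree (V N : finType) (S : V -> {set N}) (C : {set V})
  : {set N} := \bigcap_(v in C) S v.

(* P is the node set of the connecting path p(A,B) of two subtrees:
   a simple path x :: p in t starting in A, ending in B, whose other
   nodes are outside A and B (so it has exactly one node of each). *)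
Definition connecting_path (N : finType) (t : rel N) (A B P : {set N}) : Prop :=
  exists (x : N) (p : seq N),
    [/\ path t x p, uniq (x :: p), x \in A, last x p \in B
      & P = [set z in x :: p]] /\
    (forall z, z \in x :: p -> (z \in A -> z = x) /\ (z \in B -> z = last x p)).

Definition separator (V : finType) (g : rel V) (C : {set V}) : Prop :=
  exists u w, [/\ u \notin C, w \notin C & ~~ connect (restrict g (~: C)) u w].

(* Main.v *)
Require Import Defs.
From mathcomp Require Import all_boot.
Set Implicit Arguments. Unset Strict Implicit. Unset Printing Implicit Defensive.

Lemma path_restrict (T : finType) (e : rel T) (A : {set T}) x s :
  path e x s -> x \in A -> all (mem A) s -> path (restrict e A) x s.
Proof.
elim: s x => //= y s IH x /andP[exy ps] xA /andP[yA sA].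
by rewrite /restrict /= exy xA yA /= IH.
Qed.

Lemma path_restrictE (T : finType) (e : rel T) (A : {set T}) x s :
  path (restrict e A) x s -> path e x s /\ all (mem A) s.
Proof.
elim: s x => //= y s IH x; rewrite /restrict /= => /andP[/and3P[exy xA yA] ps].
by have [h1 h2] := IH _ ps; rewrite exy yA h1 h2.
Qed.

Lemma connect_restrict_sub (T : finType) (e : rel T) (A B : {set T}) x y :
  A \subset B -> connect (restrict e A) x y -> connect (restrict e B) x y.
Proof.
move=> sAB /connectP[s ps ->]; apply/connectP; exists s => //.
apply: sub_path ps => a b; rewrite /restrict /= => /and3P[-> aA bA].
by rewrite (subsetP sAB _ aA) (subsetP sAB _ bA).
Qed.

Lemma restrict_sym (T : finType) (e : rel T) (A : {set T}) :
  symmetric e -> symmetric (restrict e A).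
Proof. by move=> se a b; rewrite /restrict /= se; congr andb; apply: andbC. Qed.

Lemma tree_walk (N : finType) (t : rel N) :
  symmetric t -> (forall s : seq N, uniq s -> 3 <= size s -> ~~ cycle t s) ->
  forall x p q z, path t x p -> uniq (x :: p) -> path t x q ->
  last x q = last x p -> z \in x :: p -> z \in x :: q.
Proof.
move=> st nocyc x p q z pp up pq lq zp.
apply/idPn => zq.
have zx : z != x by apply: contraNneq zq => ->; rewrite mem_head.
move: zp; rewrite inE (negbTE zx) /= => zp.
case: (splitPr zp) pp up lq => p1 p2.
rewrite cat_path => /andP[pp1 /andP[ty1z pp2]] up lq.
have uz : z \notin x :: p1.
  by move: up; rewrite -cat_cons cat_uniq => /and3P[_ /hasPn h _]; apply: h; rewrite mem_head.
have uz2 : z \notin p2 by move: up; rewrite -cat_cons cat_uniq => /and3P[_ _ /andP[]].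
case: p2 pp2 up lq uz2 => [|y2 p3] pp2 up lq uz2.
  by move: (mem_last x q); rewrite lq last_cat /= (negbTE zq).
move: pp2 => /= /andP[tzy2 pp3].
set E := restrict t (~: [set z]).
have allA s : z \notin s -> all (mem (~: [set z])) s.
  by move=> h; apply/allP => a aS; rewrite !inE; apply: contraNneq h => <-.
have c1 : connect E x (last x p1).
  apply/connectP; exists p1 => //; apply: path_restrict => //.
    by rewrite !inE eq_sym.
  by apply: allA; apply: contra uz => h; rewrite inE h orbT.
have c2 : connect E x (last x q).
  apply/connectP; exists q => //; apply: path_restrict => //.
    by rewrite !inE eq_sym.
  by apply: allA; apply: contra zq => h; rewrite inE h orbT.
have c3 : connect E y2 (last y2 p3).
  apply/connectP; exists p3 => //; apply: path_restrict => //.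
    by rewrite !inE; apply: contraNneq uz2 => ->; rewrite mem_head.
  by apply: allA; apply: contra uz2 => h; rewrite inE h orbT.
have sE : connect_sym E by apply: sym_connect_sym; apply: restrict_sym.
have c : connect E (last x p1) y2.
  apply: connect_trans (_ : connect E x y2).
    by rewrite sE.
  apply: connect_trans c2 _.
  by rewrite lq last_cat /= sE.
case/connectP: c => r pr lr.
case: (shortenP pr) lr => r' pr' ur' _ lr.
set y1 := last x p1 in pr pr' ur' lr ty1z c1.
have [ptr' allr'] := path_restrictE (pr' : path (restrict t (~: [set z])) y1 r').
have y1z : y1 != z by apply: contraNneq uz => <-; exact: mem_last.
have y12 : y1 != y2.
  move: up; rewrite -cat_cons cat_uniq => /and3P[_ /hasPn h _].
  have hy2 : y2 \in z :: y2 :: p3 by rewrite !inE eqxx orbT.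
  by apply: contraNneq (h y2 hy2) => <-; exact: mem_last.
apply: (negP (nocyc (z :: y1 :: r') _ _)).
- rewrite cons_uniq ur' andbT inE negb_or eq_sym y1z /=.
  apply/negP => zr; move/allP: allr' => /(_ z zr).
  by rewrite !inE eqxx.
- case: r' pr' ur' lr {pr allr' ptr'} => [|a r''] _ _ /=.
    by move=> e; rewrite e eqxx in y12.
  by [].
- rewrite /cycle rcons_path /= -lr ptr'.
  by rewrite st ty1z st tzy2.
Qed.

Lemma maxclique_notsub (V : finType) (g : rel V) (C D : {set V}) :
  maximal_clique g C -> clique g D -> C != D -> exists u, u \in C /\ u \notin D.
Proof.
move=> [_ mC] cD nCD.
have /subsetPn [u uC uD] : ~~ (C \subset D).
  by apply/negP => sCD; move: nCD; rewrite (mC D cD sCD) eqxx.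
by exists u.
Qed.

Theorem lemma4 (V N : finType) (g : rel V) (t : rel N) (S : V -> {set N})
    (C C' C'' : {set V}) (P : {set N}) :
  simple_graph g -> chordal g -> subtree_model g t S ->
  maximal_clique g C -> maximal_clique g C' -> maximal_clique g C'' ->
  C != C' -> C' != C'' -> C != C'' ->
  connecting_path t (clique_subtree S C) (clique_subtree S C'') P ->
  clique_subtree S C' :&: P != set0 ->
  separator g C'.
Proof.
move=> [sg ig] _ [[[st _] _ nocyc] subS modS] mC mC' mC'' nC nC' _ [x [p [[pp up xA lB Pe] _]]].
case/set0Pn => z; rewrite inE => /andP[zC' zP].
have [u [uC uC']] := maxclique_notsub mC mC'.1 nC.
have [w [wC'' wC']] : exists w, w \in C'' /\ w \notin C'.
  by apply: maxclique_notsub mC'' mC'.1 _; rewrite eq_sym.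
exists u, w; split => //; apply/negP => conn.
set E := restrict g (~: C').
set K := [set v | (v \notin C') && connect E u v].
set U := \bigcup_(v in K) S v.
set R := restrict t U.
have xu : x \in S u by move/bigcapP: xA; apply.
have lw : last x p \in S w by move/bigcapP: lB; apply.
have SU v : v \in K -> S v \subset U.
  by move=> vK; apply/subsetP => n nv; apply/bigcupP; exists v.
have reach : forall v, connect E u v -> forall n, n \in S v -> connect R x n.
  move=> v /connectP [s ps ->].
  have uK : u \in K by rewrite inE uC' connect0.
  have h0 : forall n, n \in S u -> connect R x n.
    move=> n nu; apply: connect_restrict_sub (SU _ uK) _.
    by apply: (subS u).2.
  move: ps uK h0; move: (u) => v0.
  elim: s v0 => [|v1 s IH] v0 //= /andP [e01 ps] v0K h0.
  move: e01; rewrite /E /restrict /= => /and3P [g01 v0C v1C].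
  have v1K : v1 \in K.
    rewrite /K !inE; rewrite inE in v1C; rewrite v1C /=.
    move: v0K; rewrite /K inE => /andP [_ c0]; apply: connect_trans c0 _.
    by apply: connect1; rewrite /E /restrict /= g01 v0C !inE v1C.
  refine (IH v1 ps v1K _).
  move=> n nv1.
  have n01 : v0 != v1 by apply: contraTneq g01 => ->; rewrite ig.
  move: (modS _ _ n01); rewrite g01 => /set0Pn [m]; rewrite inE => /andP [m0 m1].
  apply: connect_trans (h0 _ m0) _.
  apply: connect_restrict_sub (SU _ v1K) _.
  by apply: (subS v1).2.
have := reach w conn _ lw.
case/connectP => q pq lq.
have [ptq allq] := path_restrictE pq.
have zp : z \in x :: p by move: zP; rewrite Pe inE.
have zq := tree_walk st nocyc pp up ptq (esym lq) zp.
have uK : u \in K by rewrite /K inE uC' connect0.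
have zU : z \in U.
  move: zq; rewrite inE => /orP [/eqP -> | zq].
    by apply: (subsetP (SU _ uK)).
  by move/allP: allq => /(_ z zq).
case/bigcupP: zU => v; rewrite /K inE => /andP [vC' _] zv.
case/negP: vC'.
have cl : clique g (v |: C').
  have adj c : c \in C' -> c != v -> g v c.
    move=> cC cv; rewrite -modS; last by rewrite eq_sym.
    apply/set0Pn; exists z; rewrite inE zv /=.
    by move/bigcapP: zC'; apply.
  move=> a b /setU1P [-> | aC] /setU1P [-> | bC] ab.
  - by rewrite eqxx in ab.
  - by apply: adj => //; rewrite eq_sym.
  - by rewrite sg; apply: adj.
  - by apply: mC'.1.
have := mC'.2 _ cl (subsetUr _ _).
by move=> <-; rewrite setU11.
Qed.
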